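(* Let $d>0$, let $J$ satisfy (J) and (J2), let $f$ satisfy (f3), let $c_*$ be the minimal traveling wave speed, and fix $c\in(0,c_* )$ and a constant $M$ as in the context. For each $\sigma\in(0,1)$ let $\phi_\sigma=\lim_{n\to\infty}A_\sigma^n[\phi_*^\sigma]$ be the solution obtained by the iteration described in the context. Then there exists $\delta_0\in(0,1]$ such that $$\phi_\sigma(x)\ge\phi_\sigma(y)\ \text{ whenever } x\le y\le0,\ \sigma\in(0,\delta_0),$$ and $$\phi_{\sigma_1}(x)\le\phi_{\sigma_2}(x)\ \text{ whenever } 0<\sigma_1\le\sigma_2<1,\ x\le0.$$
   Context: Condition (J): $J\in C(\mathbb{R})\cap L^\infty(\mathbb{R})$, $J\ge 0$, $J(0)>0$, $\int_{\mathbb{R}}J=1$, $J$ even. Condition (J2): there exists $\lambda>0$ with $\int_{\mathbb{R}}J(x)e^{\lambda x}dx<\infty$. Condition (f3): $f\in C^1([0,\infty))$, $f(0)=f(1)=0$, $f>0$ in $(0,1)$, $f'(0)>0>f'(1)$, $f(u)/u$ nonincreasing in $u>0$. Known fact: under (J), (J2), (f3) there is $c_*>0$ such that $d\int_{\mathbb{R}}J(x-y)\phi(y)dy-d\phi(x)+c\phi'(x)+f(\phi(x))=0$ on $\mathbb{R}$, $\phi(-\infty)=1$, $\phi(+\infty)=0$, has a nonincreasing bounded solution iff $c\ge c_*$; such solutions are $C^1$. Construction (for fixed $c\in(0,c_* )$): $M>0$ is chosen so that $\tilde f(u):=(cM-d)u+f(u)$ is increasing on $[0,1]$; $a(x)=\int_{-\infty}^xJ(y)dy$.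 For $\sigma\in(0,1)$, $A_\sigma$ acts on $\{\phi\in C(\mathbb{R}):0\le\phi\le1\}$ by $A_\sigma[\phi](x)=\sigma$ for $x\ge0$ and, for $x<0$, $A_\sigma[\phi](x)=e^{Mx}\sigma+\frac{e^{Mx}}{c}\int_x^0e^{-M\xi}\big[d\int_{-\infty}^0J(\xi-y)\phi(y)dy+d\sigma a(\xi)+\tilde f(\phi(\xi))\big]d\xi$. Fix one nonincreasing traveling wave $\psi$ with speed $c_*$; for each $\sigma$ let $\phi_{*\sigma}$ be the translate of $\psi$ with $\phi_{*\sigma}(0)=\sigma$ and $\phi_*^\sigma=\max\{\phi_{*\sigma},\sigma\}$. The limit $\phi_\sigma$ exists and solves $d\int_{\mathbb{R}}J(x-y)\phi(y)dy-d\phi+c\phi'+f(\phi)=0$ for $x<0$, $\phi(-\infty)=1$, $\phi=\sigma$ on $[0,\infty)$. *)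

(* Defs.v *)
From HB Require Import structures.
From mathcomp Require Import all_boot all_order all_algebra.
From mathcomp Require Import all_classical all_reals all_analysis.
Set Implicit Arguments. Unset Strict Implicit. Unset Printing Implicit Defensive.
Import Order.TTheory GRing.Theory Num.Theory.
Import numFieldNormedType.Exports.
Local Open Scope classical_set_scope.
Local Open Scope ring_scope.

Section Defs.
Variable R : realType.
Local Notation leb := (@lebesgue_measure R).

Definition condJ (J : R -> R) : Prop :=
  continuous J /\
  (exists B : R, forall x, `|J x| <= B) /\
  (forall x, 0 <= J x) /\ 0 < J 0 /\
  (\int[leb]_(x in setT) (J x)%:E = 1)%E /\
  (forall x, J (- x) = J x).

Definition condJ2 (J : R -> R) : Prop :=
  exists lam : R, 0 < lam /\
    (\int[leb]_(x in setT) (J x * expR (lam * x))%:E < +oo)%E.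

Definition condf3 (f : R -> R) : Prop :=
  (forall x, 0 <= x -> derivable f x 1) /\
  {within `[0, +oo[, continuous (derive1 f)} /\
  f 0 = 0 /\ f 1 = 0 /\
  (forall u, 0 < u < 1 -> 0 < f u) /\
  0 < (derive1 f) 0 /\ (derive1 f) 1 < 0 /\
  (forall u v, 0 < u -> u <= v -> f v / v <= f u / u).

Definition convJ (J phi : R -> R) (x : R) : R :=
  \int[leb]_(y in setT) (J (x - y) * phi y).

Definition is_tw (d : R) (J f : R -> R) (c : R) (phi : R -> R) : Prop :=
  (forall x, derivable phi x 1) /\
  (forall x, d * convJ J phi x - d * phi x + c * derive1 phi x + f (phi x) = 0) /\
  (phi @ -oo --> (1:R)) /\
  (phi @ +oo --> (0:R)).

Definition is_nonincr_bdd_tw d J f c phi : Prop :=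
  is_tw d J f c phi /\
  (forall x y : R, x <= y -> phi y <= phi x) /\
  (exists B : R, forall x, `|phi x| <= B).

Definition is_min_speed d J f (cstar : R) : Prop :=
  0 < cstar /\
  forall c, (exists phi, is_nonincr_bdd_tw d J f c phi) <-> cstar <= c.

Definition aJ (J : R -> R) (x : R) : R :=
  \int[leb]_(y in `]-oo, x]) J y.

Definition ftilde (c M d : R) (f : R -> R) (u : R) : R :=
  (c * M - d) * u + f u.

Definition Aop (d c M : R) (J f : R -> R) (sigma : R) (phi : R -> R)
  (x : R) : R :=
  if 0 <= x then sigma
  else expR (M * x) * sigma +
       expR (M * x) / c *
       \int[leb]_(xi in `[x, 0]) (expR (- (M * xi)) *
          (d * (\int[leb]_(y in `]-oo, 0]) (J (xi - y) * phi y))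
           + d * sigma * aJ J xi + ftilde c M d f (phi xi))).

(* phi_*^sigma = max { psi(. + s), sigma }, where psi(s) = sigma *)
Definition phistar_up (psi : R -> R) (s sigma : R) (x : R) : R :=
  Num.max (psi (x + s)) sigma.

End Defs.

(* Main.v *)
Require Import Defs.
From HB Require Import structures.
From mathcomp Require Import all_boot all_order all_algebra.
From mathcomp Require Import all_classical all_reals all_analysis.
From mathcomp Require Import measurable_realfun.
From mathcomp Require Import ring lra.
Import Order.TTheory GRing.Theory Num.Theory.
Import numFieldNormedType.Exports.
Local Open Scope classical_set_scope.
Local Open Scope ring_scope.
Section refl.
Context {R : realType} (xi : R).
Local Notation leb := (@lebesgue_measure R).
Let g := fun t : R => xi - t.
Let mg : measurable_fun [set: R] g.
Proof. apply: continuous_measurable_fun => x. apply: continuousB => //. exact: cvg_cst. Qed.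

Lemma leb_refl A : measurable A -> leb (g @^-1` A) = leb A.
Proof.
move=> mA.
refine (let mu : {measure set (measurableTypeR R) -> \bar R} := @pushforward _ _ (measurableTypeR R) (measurableTypeR R) R leb g in _).
have := @lebesgue_measure_unique R mu _ A mA.
rewrite /mu /pushforward => -> //.
move=> X [[a b] _ <-] /=; rewrite /pushforward.
rewrite (_ : g @^-1` _ = `[xi - b, xi - a[%classic); last first.
  apply/seteqP; split => t; rewrite /g /= !in_itv /=.
  - by move=> /andP[h1 h2]; apply/andP; split; rewrite ?lerBlDr ?ltrBlDl; lra.
  - by move=> /andP[h1 h2]; apply/andP; split; lra.
rewrite !lebesgue_measure_itv /= !lte_fin.
have [ab|ab] := ltP a b.
  by rewrite ifT ?ltrBlDr ?ltrD2l ?ltrN2; first (congr (_%:E); lra); lra.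
by rewrite ifF //; apply/negbTE; rewrite -leNgt; lra.
Unshelve. exact: mg.
Qed.

Lemma leb_subst (D : set R) (F : R -> \bar R) : measurable D ->
  measurable_fun D F -> (forall y, D y -> (0 <= F y)%E) ->
  (\int[leb]_(y in D) F y = \int[leb]_(t in g @^-1` D) F (g t))%E.
Proof.
move=> mD mF F0.
rewrite (@eq_measure_integral _ _ _ _ (@pushforward _ _ (measurableTypeR R) (measurableTypeR R) R leb g)).
  rewrite (@ge0_integral_pushforward _ _ (measurableTypeR R) (measurableTypeR R) R g mg leb D F mD mF) //.
  by move=> y; rewrite inE; exact: F0.
move=> B mB _; rewrite /pushforward; symmetry; exact: (@leb_refl B).
Qed.
End refl.
Section expint.
Context {R : realType}.
Local Notation leb := (@lebesgue_measure R).

Lemma derivable_linN (M x : R) : derivable (fun x : R => - (M * x)) x 1.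
Proof.
have -> : (fun x : R => - (M * x)) = (fun x => (- M) * x) by apply/funext => y; rewrite mulNr.
have -> : (fun x : R => (- M) * x) = (- M) \*o (@id R) by [].
apply: derivableM => //.
Qed.

Lemma derivable_expNM (M x : R) : derivable (fun x => expR (- (M * x))) x 1.
Proof.
apply/derivable1_diffP.
apply: (@differentiable_comp _ _ _ _ (fun x => - (M * x)) expR).
  apply/derivable1_diffP; exact: derivable_linN.
by apply/derivable1_diffP; exact: derivable_expR.
Qed.

Lemma derive1_expNM (M x : R) : derive1 (fun x => expR (- (M * x))) x = - M * expR (- (M * x)).
Proof.
rewrite (@derive1_comp _ (fun x => - (M * x)) expR); last 2 first.
- exact: derivable_linN.
- exact: derivable_expR.
rewrite !derive1E.
have -> : (fun x : R => - (M * x)) = (- M) \*o (@id R) by apply/funext => y; rewrite /= mulNr.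
rewrite deriveMl; last exact: derivable_id.
rewrite derive_id /=.
have /funeqP -> := @derive_expR R.
by rewrite mulr1 mulrC.
Qed.

Lemma int_expNM (M a b : R) : 0 < M -> a <= b ->
  M * (\int[leb]_(x in `[a, b]) expR (- (M * x))) = expR (- (M * a)) - expR (- (M * b)).
Proof.
move=> M0; rewrite le_eqVlt => /predU1P[<-|ab].
  by rewrite set_itv1 Rintegral_set1 mulr0 subrr.
have ce : continuous (fun x : R => expR (- (M * x))).
  move=> x; apply: differentiable_continuous; apply/derivable1_diffP; exact: derivable_expNM.
have ie : leb.-integrable `[a, b] (EFin \o (fun x : R => expR (- (M * x)))).
  by apply: continuous_compact_integrable => //; [exact: segment_compact| exact: continuous_subspaceT].
have h := @continuous_FTC2 R (fun x => - M * expR (- (M * x))) (fun x => expR (- (M * x))) a b ab.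
have hI := h _ _ _.
have hR : \int[leb]_(x in `[a, b]) (- M * expR (- (M * x))) = expR (- (M * b)) - expR (- (M * a)).
  rewrite /Rintegral hI //.
  - apply: continuous_subspaceT => x; apply: (@cvgM _ _ _ _ (fun=> - M) (fun x => expR (- (M * x)))); [exact: cvg_cst | exact: ce].
  - split.
    + move=> x _; exact: derivable_expNM.
    + by apply: cvg_at_right_filter; exact: ce.
    + by apply: cvg_at_left_filter; exact: ce.
  - move=> x _; exact: derive1_expNM.
rewrite RintegralZl // in hR.
have -> : M * \int[leb]_(x in `[a, b]) expR (- (M * x)) = - (- M * \int[leb]_(x in `[a, b]) expR (- (M * x))) by rewrite mulNr opprK.
by rewrite hR opprB.
Qed.
End expint.
Section outer.
Context {R : realType} (c M : R).
Hypotheses (c0 : 0 < c) (M0 : 0 < M).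
Local Notation leb := (@lebesgue_measure R).
Local Notation e := (fun x : R => expR (- (M * x))).

Lemma ce : continuous e.
Proof.
move=> x; apply: differentiable_continuous; apply/derivable1_diffP; exact: derivable_expNM.
Qed.

Lemma ni_meas (G : R -> R) D : measurable D -> (forall x y, x <= y -> G y <= G x) ->
  measurable_fun D G.
Proof. by move=> mD GN; apply: nonincreasing_measurable => // x y; exact: GN. Qed.

Lemma int_eG (G : R -> R) (B a b : R) : (forall x y, x <= y -> G y <= G x) ->
  (forall x, 0 <= G x <= B) ->
  leb.-integrable `[a, b] (EFin \o (fun x => e x * G x)).
Proof.
move=> GN GB.
apply: (@le_integrable _ _ _ leb _ _ _ (EFin \o (fun x => B * e x))) => //.
- apply/measurable_EFinP; apply: measurable_funM.
    exact: measurable_funTS (continuous_measurable_fun ce).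
  exact: ni_meas.
- move=> x _; have /andP[G0 GB'] := GB x.
  rewrite /= lee_fin !ger0_norm ?mulr_ge0 ?expR_ge0 ?(le_trans G0 GB') //.
  by rewrite mulrC ler_wpM2r ?expR_ge0.
- apply: continuous_compact_integrable; first exact: segment_compact.
  apply: continuous_subspaceT => x.
  apply: (@cvgM _ _ _ _ (fun=> B) e); [exact: cvg_cst | exact: ce].
Qed.


Lemma int_e (m a b : R) : leb.-integrable `[a, b] (EFin \o (fun x => m * e x)).
Proof.
apply: continuous_compact_integrable; first exact: segment_compact.
apply: continuous_subspaceT => x.
apply: (@cvgM _ _ _ _ (fun=> m) e); [exact: cvg_cst | exact: ce].
Qed.

Lemma Rint_me (m a b : R) : a <= b ->
  M * \int[leb]_(x in `[a, b]) (m * e x) = m * (e a - e b).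
Proof.
move=> ab; rewrite RintegralZl //; last first.
  by have := int_e 1 a b; apply: eq_integrable => // x _ /=; rewrite mul1r.
by rewrite mulrCA int_expNM.
Qed.

Lemma Rint_eG_ge (G : R -> R) (m B a b : R) : a <= b ->
  (forall x y, x <= y -> G y <= G x) -> (forall x, 0 <= G x <= B) ->
  (forall x, a <= x <= b -> m <= G x) ->
  m * (e a - e b) <= M * \int[leb]_(x in `[a, b]) (e x * G x).
Proof.
move=> ab GN GB Gm; rewrite -Rint_me // ler_pM2l //.
apply: le_Rintegral => //; [exact: int_e | exact: (int_eG G B a b GN GB) |].
move=> x; rewrite /= in_itv /= => /andP[ax xb].
by rewrite mulrC ler_wpM2l ?expR_ge0 // Gm // ax xb.
Qed.

Lemma Rint_eG_le (G : R -> R) (m B a b : R) : a <= b ->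
  (forall x y, x <= y -> G y <= G x) -> (forall x, 0 <= G x <= B) ->
  (forall x, a <= x <= b -> G x <= m) ->
  M * \int[leb]_(x in `[a, b]) (e x * G x) <= m * (e a - e b).
Proof.
move=> ab GN GB Gm; rewrite -Rint_me // ler_pM2l //.
apply: le_Rintegral => //; [exact: (int_eG G B a b GN GB) | exact: int_e |].
move=> x; rewrite /= in_itv /= => /andP[ax xb].
by rewrite mulrC ler_wpM2r ?expR_ge0 // Gm // ax xb.
Qed.


Definition uf (s : R) (G : R -> R) (x : R) : R :=
  if 0 <= x then s else expR (M * x) * s +
     expR (M * x) / c * \int[leb]_(xi in `[x, 0]) (expR (- (M * xi)) * G xi).

Lemma e0 : e 0 = 1.
Proof. by rewrite /= mulr0 oppr0 expR0. Qed.

Lemma eN x : e x * expR (M * x) = 1.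
Proof. by rewrite /= expRN mulVf // gt_eqF // expR_gt0. Qed.

Lemma uf_bounds (s : R) (G : R -> R) : 0 <= s <= 1 ->
  (forall x y, x <= y -> G y <= G x) -> (forall x, c * M * s <= G x <= c * M) ->
  forall x, s <= uf s G x <= 1.
Proof.
move=> /andP[s0 s1] GN GB x; rewrite /uf.
case: ifPn => [_|]; first by rewrite lexx s1.
rewrite -ltNge => x0.
have GB' : forall x, 0 <= G x <= c * M.
  move=> y; have /andP[h1 h2] := GB y; rewrite h2 andbT.
  by apply: le_trans h1; rewrite !mulr_ge0 // ltW.
set I := Rintegral _ _ _.
have h1 := @Rint_eG_ge G (c * M * s) (c * M) x 0 (ltW x0) GN GB'.
have h2 := @Rint_eG_le G (c * M) (c * M) x 0 (ltW x0) GN GB'.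
rewrite -/I e0 in h1 h2.
have := h1 (fun y _ => (andP (GB y)).1); have := h2 (fun y _ => (andP (GB y)).2) => {h1 h2} h2 h1.
have Ep : 0 < expR (M * x) by exact: expR_gt0.
have hE := eN x; set E := expR (M * x) in Ep hE *; set Ei := e x in h1 h2 hE.
set k := E / c.
have kc : k * c = E by rewrite /k mulfVK // gt_eqF.
have k0 : 0 < k by rewrite /k divr_gt0.
have hI1 : c * s * (Ei - 1) <= I.
  rewrite -(ler_pM2l M0); apply: le_trans h1; rewrite le_eqVlt; apply/orP; left; apply/eqP; ring.
have hI2 : I <= c * (Ei - 1).
  rewrite -(ler_pM2l M0); apply: le_trans h2 _; rewrite le_eqVlt; apply/orP; left; apply/eqP; ring.
have L1 : k * (c * s * (Ei - 1)) <= k * I by rewrite ler_pM2l.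
have L2 : k * I <= k * (c * (Ei - 1)) by rewrite ler_pM2l.
have E1 : k * (c * s * (Ei - 1)) = s - E * s.
  rewrite mulrA mulrA kc; transitivity (s * (Ei * E) - E * s); first ring.
  by rewrite hE mulr1.
have E2 : k * (c * (Ei - 1)) = 1 - E.
  rewrite mulrA kc; transitivity (Ei * E - E); first ring.
  by rewrite hE.
rewrite E1 in L1; rewrite E2 in L2.
apply/andP; split; first lra.
have : E * s <= E by rewrite -[leRHS]mulr1 ler_pM2l.
lra.
Qed.

Lemma uf_noninc (s : R) (G : R -> R) : 0 <= s <= 1 ->
  (forall x y, x <= y -> G y <= G x) -> (forall x, c * M * s <= G x <= c * M) ->
  forall x y, x <= y -> uf s G y <= uf s G x.
Proof.
move=> s01 GN GB x y xy.
have /andP[s0 s1] := s01.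
have ub := uf_bounds s G s01 GN GB.
have [y0|y0] := leP 0 y.
  by rewrite {1}/uf y0; have /andP[] := ub x.
have x0 : x < 0 by apply: le_lt_trans y0.
move: xy; rewrite le_eqVlt => /predU1P[->//|xy].
rewrite /uf !ifF; last 2 first.
  by apply/negbTE; rewrite -ltNge.
  by apply/negbTE; rewrite -ltNge.
have GB' : forall x, 0 <= G x <= c * M.
  move=> z; have /andP[h1 h2] := GB z; rewrite h2 andbT.
  by apply: le_trans h1; rewrite !mulr_ge0 // ltW.
have iG := int_eG G (c * M) x 0 GN GB'.
rewrite (@itv_bndbnd_setU _ _ (BLeft x) (BLeft y) (BRight 0)) /=; last 2 first.
  by rewrite bnd_simp; apply: ltW.
  by rewrite bnd_simp; apply: ltW.
rewrite Rintegral_setU //; last 2 first.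
  by rewrite -itv_bndbnd_setU // bnd_simp; apply: ltW.
  rewrite disj_set2E; apply/eqP; rewrite -subset0 => z [] /=; rewrite !in_itv /=.
  by move=> /andP[_ h1] /andP[h2 _]; move: (lt_le_trans h1 h2); rewrite ltxx.
rewrite Rintegral_itv_bndo_bndc; last first.
  by apply: integrableS (int_eG G (c * M) x y GN GB') => //; apply: subset_itvl; rewrite bnd_simp.
set I1 := \int[leb]_(x1 in `[x, y]) (expR (- (M * x1)) * G x1).
set I2 := \int[leb]_(x1 in `[y, 0]) (expR (- (M * x1)) * G x1).
have h3 := @Rint_eG_ge G (G y) (c * M) x y (ltW xy) GN GB'.
have h4 := @Rint_eG_le G (G y) (c * M) y 0 (ltW y0) GN GB'.
have {h3}h3 := h3 (fun z => fun h => GN z y (andP h).2).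
have {h4}h4 := h4 (fun z => fun h => GN y z (andP h).1).
rewrite e0 -/I1 -/I2 in h3 h4.
have ha := eN x; have hb := eN y.
set a := expR (M * x) in ha *; set b := expR (M * y) in hb *.
set ai := e x in h3 ha; set bi := e y in h3 h4 hb.
have a0 : 0 < a by exact: expR_gt0.
have ab : a < b by rewrite /a /b ltr_expR ltr_pM2l.
have g0 : c * M * s <= G y by have /andP[] := GB y.
set g := G y in h3 h4 g0.
have P1 : (b - a) * (M * I2) <= (b - a) * (g * (bi - 1)) by rewrite ler_wpM2l // subr_ge0 ltW.
have P2 : a * (g * (ai - bi)) <= a * (M * I1) by rewrite ler_wpM2l // ltW.
have P3 : (b - a) * (c * M * s) <= (b - a) * g by rewrite ler_wpM2l // subr_ge0 ltW.
have Q1 : g * (bi * b) = g by rewrite hb mulr1.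
have Q2 : g * (ai * a) = g by rewrite ha mulr1.
have cM0 : 0 < c * M by rewrite mulr_gt0.
rewrite -(ler_pM2l cM0).
have -> : c * M * (b * s + b / c * I2) = c * M * b * s + b * (M * I2).
  by field; rewrite gt_eqF.
have -> : c * M * (a * s + a / c * (I1 + I2)) = c * M * a * s + a * (M * I1) + a * (M * I2).
  by field; rewrite gt_eqF.
nra.
Qed.

Lemma uf_le (s1 s2 : R) (G1 G2 : R -> R) : 0 <= s1 -> s1 <= s2 -> s2 <= 1 ->
  (forall x y, x <= y -> G1 y <= G1 x) -> (forall x, c * M * s1 <= G1 x <= c * M) ->
  (forall x y, x <= y -> G2 y <= G2 x) -> (forall x, c * M * s2 <= G2 x <= c * M) ->
  (forall x, G1 x <= G2 x) ->
  forall x, uf s1 G1 x <= uf s2 G2 x.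
Proof.
move=> s10 s12 s21 GN1 GB1 GN2 GB2 G12 x; rewrite /uf.
case: ifPn => //; rewrite -ltNge => x0.
have GB' : forall (s : R) (G : R -> R), 0 <= s -> (forall x, c * M * s <= G x <= c * M) -> forall x, 0 <= G x <= c * M.
  move=> s G s0 GB z; have /andP[h1 h2] := GB z; rewrite h2 andbT.
  by apply: le_trans h1; rewrite !mulr_ge0 // ltW.
have Ep : 0 < expR (M * x) by exact: expR_gt0.
apply: lerD; first by rewrite ler_wpM2l // ltW.
apply: ler_wpM2l; first by rewrite divr_ge0 // ltW.
apply: le_Rintegral => //.
- exact: (int_eG G1 (c * M) x 0 GN1 (GB' _ _ s10 GB1)).
- exact: (int_eG G2 (c * M) x 0 GN2 (GB' _ _ (le_trans s10 s12) GB2)).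
- by move=> z _; rewrite ler_wpM2l ?expR_ge0.
Qed.

End outer.
Definition goodf {R : realType} (s : R) (p : R -> R) :=
  (forall x y, x <= y -> p y <= p x) /\ (forall x, s <= p x <= 1) /\ (forall x, 0 <= x -> p x = s).

Section inner.
Context {R : realType} (J : R -> R).
Hypotheses (Jc : continuous J) (J0 : forall x, 0 <= J x)
  (J1 : (\int[@lebesgue_measure R]_(x in setT) (J x)%:E = 1)%E).
Local Notation leb := (@lebesgue_measure R).

Let mJ : measurable_fun setT J.
Proof. exact: continuous_measurable_fun. Qed.

Lemma meas_Jh (h : R -> R) : measurable_fun setT h ->
  measurable_fun setT (fun t => J t * h t).
Proof. by move=> mh; apply: measurable_funM. Qed.

Lemma intJ_bnd (h : R -> R) : measurable_fun setT h -> (forall t, 0 <= h t <= 1) ->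
  (0 <= \int[leb]_(t in setT) (J t * h t)%:E <= 1)%E.
Proof.
move=> mh h01; apply/andP; split.
  by apply: integral_ge0 => t _; rewrite lee_fin mulr_ge0 // (andP (h01 t)).1.
rewrite -J1; apply: ge0_le_integral => //.
- by move=> t _; rewrite lee_fin mulr_ge0 // (andP (h01 t)).1.
- by apply/measurable_EFinP; exact: meas_Jh.
- by apply/measurable_EFinP.
- by move=> t _; rewrite lee_fin ler_piMr // (andP (h01 t)).2.
Qed.

Lemma intJ_fin (h : R -> R) : measurable_fun setT h -> (forall t, 0 <= h t <= 1) ->
  (\int[leb]_(t in setT) (J t * h t)%:E)%E \is a fin_num.
Proof.
move=> mh h01; have /andP[a b] := intJ_bnd _ mh h01.
by rewrite ge0_fin_numE // (le_lt_trans b) // ltey.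
Qed.

Lemma fineJ_le (h1 h2 : R -> R) : measurable_fun setT h1 -> measurable_fun setT h2 ->
  (forall t, 0 <= h1 t <= 1) -> (forall t, 0 <= h2 t <= 1) -> (forall t, h1 t <= h2 t) ->
  fine (\int[leb]_(t in setT) (J t * h1 t)%:E)%E <= fine (\int[leb]_(t in setT) (J t * h2 t)%:E)%E.
Proof.
move=> m1 m2 b1 b2 h12; apply: fine_le; [exact: intJ_fin|exact: intJ_fin|].
apply: ge0_le_integral => //.
- by move=> t _; rewrite lee_fin mulr_ge0 // (andP (b1 t)).1.
- by apply/measurable_EFinP; exact: meas_Jh.
- by apply/measurable_EFinP; exact: meas_Jh.
- by move=> t _; rewrite lee_fin ler_wpM2l.
Qed.

Lemma fineJ_cst (s : R) : 0 <= s -> fine (\int[leb]_(t in setT) (J t * s)%:E)%E = s.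
Proof.
move=> s0.
under eq_integral do rewrite EFinM muleC.
rewrite ge0_integralZl_EFin //.
- by rewrite J1 mule1.
- by move=> t _; rewrite lee_fin.
- by apply/measurable_EFinP.
Qed.

Lemma meas_ni (p : R -> R) : (forall x y, x <= y -> p y <= p x) -> measurable_fun setT p.
Proof. by move=> pN; apply: nonincreasing_measurable => // x y; exact: pN. Qed.

Lemma meas_shift (p : R -> R) (xi : R) : (forall x y, x <= y -> p y <= p x) ->
  measurable_fun setT (fun t : R => p (xi - t)).
Proof.
move=> pN; apply: nondecreasing_measurable => // x y xy; apply: pN.
by rewrite lerD2l lerN2.
Qed.

Definition Lconv (p : R -> R) (xi : R) : R :=
  fine (\int[leb]_(t in setT) (J t * p (xi - t))%:E)%E.

Lemma L_bounds (s : R) (p : R -> R) xi : 0 <= s -> goodf s p -> s <= Lconv p xi <= 1.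
Proof.
move=> s0 [pN [pb _]].
have mp := meas_shift p xi pN.
have b2 : forall t, 0 <= p (xi - t) <= 1.
  by move=> t; have /andP[h1 h2] := pb (xi - t); rewrite h2 (le_trans s0 h1).
have s1 : s <= 1 by have /andP[h1 h2] := pb 0; exact: le_trans h2.
apply/andP; split.
  have := @fineJ_le (fun=> s) (fun t => p (xi - t)) (measurable_cst _) mp _ b2 _.
  rewrite fineJ_cst //; apply.
  - by move=> _; rewrite s0 s1.
  - by move=> t; have /andP[] := pb (xi - t).
have := @fineJ_le (fun t => p (xi - t)) (fun=> 1) mp (measurable_cst _) b2 _ _.
rewrite fineJ_cst //; apply.
- by move=> _; rewrite ler01 lexx.
- by move=> t; have /andP[] := b2 t.
Qed.

Lemma L_noninc (s : R) (p : R -> R) x y : 0 <= s -> goodf s p -> x <= y -> Lconv p y <= Lconv p x.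
Proof.
move=> s0 [pN [pb _]] xy.
have b2 : forall xi t, 0 <= p (xi - t) <= 1.
  by move=> xi t; have /andP[h1 h2] := pb (xi - t); rewrite h2 (le_trans s0 h1).
apply: fineJ_le; [exact: meas_shift|exact: meas_shift|by []|by []|].
by move=> t; apply: pN; rewrite lerD2r.
Qed.

Lemma L_mono (s1 s2 : R) (p1 p2 : R -> R) x : 0 <= s1 -> 0 <= s2 -> goodf s1 p1 -> goodf s2 p2 ->
  (forall x, p1 x <= p2 x) -> Lconv p1 x <= Lconv p2 x.
Proof.
move=> s10 s20 [pN1 [pb1 _]] [pN2 [pb2 _]] p12.
apply: fineJ_le; [exact: meas_shift|exact: meas_shift| | |by []].
- by move=> t; have /andP[h1 h2] := pb1 (x - t); rewrite h2 (le_trans s10 h1).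
- by move=> t; have /andP[h1 h2] := pb2 (x - t); rewrite h2 (le_trans s20 h1).
Qed.

Lemma KL (s : R) (p : R -> R) xi : 0 <= s -> goodf s p ->
  \int[leb]_(y in `]-oo, 0]) (J (xi - y) * p y) + s * \int[leb]_(y in `]-oo, xi]) J y
  = Lconv p xi.
Proof.
move=> s0 gp; have [pN [pb p0]] := gp.
have b2 : forall t, 0 <= p (xi - t) <= 1.
  by move=> t; have /andP[h1 h2] := pb (xi - t); rewrite h2 (le_trans s0 h1).
pose F := fun t => (J t * p (xi - t))%:E.
have mF : measurable_fun setT F.
  by apply/measurable_EFinP; apply: meas_Jh; exact: meas_shift.
have F0 : forall t, (0 <= F t)%E.
  by move=> t; rewrite lee_fin mulr_ge0 // (andP (b2 t)).1.
have hsplit : (\int[leb]_(t in setT) F t = \int[leb]_(t in `]-oo, xi[) F t + \int[leb]_(t in `[xi, +oo[) F t)%E.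
  rewrite -set_itvNyy (@itv_bndbnd_setU _ _ -oo%O (BLeft xi) +oo%O) //.
  rewrite ge0_integral_setU //.
  - by rewrite -itv_bndbnd_setU // set_itvNyy.
  - rewrite disj_set2E; apply/eqP; rewrite -subset0 => z [] /=; rewrite !in_itv /= andbT.
    by move=> h1 h2; move: (lt_le_trans h1 h2); rewrite ltxx.
have hA : (\int[leb]_(t in `]-oo, xi[) F t = s%:E * \int[leb]_(t in `]-oo, xi]) (J t)%:E)%E.
  rewrite -integral_itv_bndo_bndc; last by apply/measurable_EFinP; exact: measurable_funTS.
  transitivity (\int[leb]_(t in `]-oo, xi[) (s%:E * (J t)%:E))%E.
    apply: eq_integral => t; rewrite inE /= in_itv /= => txi.
    rewrite /F p0; first by rewrite EFinM muleC.
    by rewrite subr_ge0 ltW.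
  rewrite ge0_integralZl_EFin //.
  - by move=> t _; rewrite lee_fin.
  - by apply/measurable_EFinP; exact: measurable_funTS.
have hB : (\int[leb]_(t in `[xi, +oo[) F t = \int[leb]_(y in `]-oo, 0%R]) (J (xi - y) * p y)%:E)%E.
  rewrite [RHS](@leb_subst _ xi) //.
  - rewrite (_ : (fun t => xi - t) @^-1` `]-oo, 0] = `[xi, +oo[%classic); last first.
      by apply/seteqP; split => t /=; rewrite !in_itv /= andbT subr_le0.
    by apply: eq_integral => t _; rewrite /F subKr.
  - apply/measurable_EFinP; apply: measurable_funM.
      apply: measurable_funTS; apply: continuous_measurable_fun => t.
      apply: continuous_comp; last exact: Jc.
      by apply: continuousB => //; exact: cvg_cst.
    by apply: measurable_funTS; exact: meas_ni.
  - by move=> y _; rewrite lee_fin mulr_ge0 // (le_trans s0 (andP (pb y)).1).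
have fin := intJ_fin _ (meas_shift p xi pN) b2.
rewrite /Lconv -/F hsplit in fin *.
have Age : (0 <= \int[leb]_(t in `]-oo, xi[) F t)%E by apply: integral_ge0.
have Bge : (0 <= \int[leb]_(t in `[xi, +oo[) F t)%E by apply: integral_ge0.
have finA : (\int[leb]_(t in `]-oo, xi[) F t)%E \is a fin_num.
  rewrite ge0_fin_numE //; apply: (@le_lt_trans _ _ (\int[leb]_(t in `]-oo, xi[) F t + \int[leb]_(t in `[xi, +oo[) F t)%E).
    exact: leeDl.
  by have := fin; rewrite ge0_fin_numE // adde_ge0.
have finB : (\int[leb]_(t in `[xi, +oo[) F t)%E \is a fin_num.
  rewrite ge0_fin_numE //; apply: (@le_lt_trans _ _ (\int[leb]_(t in `]-oo, xi[) F t + \int[leb]_(t in `[xi, +oo[) F t)%E).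
    exact: leeDr.
  by have := fin; rewrite ge0_fin_numE // adde_ge0.
have finJ : (\int[leb]_(t in `]-oo, xi]) (J t)%:E)%E \is a fin_num.
  rewrite ge0_fin_numE; last by apply: integral_ge0 => t _; rewrite lee_fin.
  apply: (@le_lt_trans _ _ (\int[leb]_(t in setT) (J t)%:E)%E); last by rewrite J1 ltey.
  apply: ge0_subset_integral => //.
  - by apply/measurable_EFinP.
  - by move=> t _; rewrite lee_fin.
rewrite fineD // addrC; congr (_ + _).
  by rewrite hA fineM.
by rewrite hB.
Qed.

End inner.
Section main.
Context {R : realType} (d : R) (J f : R -> R) (c M : R).
Hypotheses (d0 : 0 < d) (c0 : 0 < c) (M0 : 0 < M).
Hypotheses (Jc : continuous J) (J0 : forall x, 0 <= J x)
  (J1 : (\int[@lebesgue_measure R]_(x in setT) (J x)%:E = 1)%E).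
Hypothesis fpos : forall u, 0 < u < 1 -> 0 < f u.
Hypothesis f1 : f 1 = 0.
Hypothesis ftm : {in `[0, 1] &, {homo ftilde c M d f : u v / u < v}}.
Local Notation leb := (@lebesgue_measure R).
Local Notation ft := (ftilde c M d f).

Lemma ft_le u v : 0 <= u -> u <= v -> v <= 1 -> ft u <= ft v.
Proof.
move=> u0 uv v1; move: uv; rewrite le_eqVlt => /predU1P[->//|uv].
apply/ltW/ftm => //; rewrite in_itv /= ?u0 ?v1 /=.
- by rewrite (le_trans (ltW uv) v1).
- by rewrite (le_trans u0 (ltW uv)).
Qed.

Definition Gfun (s : R) (p : R -> R) (xi : R) : R := d * Lconv J p xi + ft (p xi).

Lemma G_noninc s p : 0 <= s -> goodf s p -> forall x y, x <= y -> Gfun s p y <= Gfun s p x.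
Proof.
move=> s0 gp x y xy; have [pN [pb _]] := gp.
apply: lerD.
  by rewrite ler_pM2l //; exact: (@L_noninc _ J Jc J0 J1 s p x y s0 gp xy).
apply: ft_le; [ | exact: pN | ].
- by rewrite (le_trans s0) // (andP (pb y)).1.
- by rewrite (andP (pb x)).2.
Qed.

Lemma G_bounds s p : 0 < s < 1 -> goodf s p -> forall x, c * M * s <= Gfun s p x <= c * M.
Proof.
move=> /andP[s0 s1] gp x; have [pN [pb _]] := gp.
have /andP[L1 L2] := @L_bounds _ J Jc J0 J1 s p x (ltW s0) gp.
have /andP[p1 p2] := pb x.
have fts : ft s <= ft (p x) by apply: ft_le => //; exact: ltW.
have ft1 : ft (p x) <= ft 1 by apply: ft_le => //; rewrite (le_trans (ltW s0)).
have fs : 0 < f s by apply: fpos; rewrite s0 s1.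
rewrite /ftilde f1 addr0 mulr1 in ft1.
rewrite /ftilde in fts.
have dL1 : d * s <= d * Lconv J p x by rewrite ler_pM2l.
have dL2 : d * Lconv J p x <= d by rewrite -[leRHS]mulr1 ler_pM2l.
rewrite /Gfun /ftilde; apply/andP; split; lra.
Qed.

Lemma G_mono s1 s2 p1 p2 : 0 < s1 -> s1 <= s2 -> goodf s1 p1 -> goodf s2 p2 ->
  (forall x, p1 x <= p2 x) -> forall x, Gfun s1 p1 x <= Gfun s2 p2 x.
Proof.
move=> s10 s12 g1 g2 p12 x.
have s20 : 0 < s2 := lt_le_trans s10 s12.
apply: lerD.
  by rewrite ler_pM2l //; exact: (@L_mono _ J Jc J0 J1 s1 s2 p1 p2 x (ltW s10) (ltW s20) g1 g2 p12).
have [_ [pb1 _]] := g1; have [_ [pb2 _]] := g2.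
apply: ft_le => //.
- by rewrite (le_trans (ltW s10)) // (andP (pb1 x)).1.
- by rewrite (andP (pb2 x)).2.
Qed.

Lemma Aop_uf s p : 0 <= s -> goodf s p -> forall x, Aop d c M J f s p x = uf c M s (Gfun s p) x.
Proof.
move=> s0 gp x; rewrite /Aop /uf; case: ifPn => // _.
congr (_ + _ * _); apply: eq_Rintegral => xi _.
rewrite /Gfun -(@KL _ J Jc J0 J1 s p xi s0 gp) /aJ; congr (_ * _); ring.
Qed.

Lemma Aop_good s p : 0 < s < 1 -> goodf s p -> goodf s (Aop d c M J f s p).
Proof.
move=> s01 gp; have /andP[s0 s1] := s01.
have e := Aop_uf s p (ltW s0) gp.
have GN := G_noninc s p (ltW s0) gp; have GB := G_bounds s p s01 gp.
have s01' : 0 <= s <= 1 by rewrite (ltW s0) (ltW s1).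
split; [|split].
- move=> x y xy; rewrite !e; exact: (@uf_noninc _ c M c0 M0 s _ s01' GN GB x y xy).
- by move=> x; rewrite e; exact: (@uf_bounds _ c M c0 M0 s _ s01' GN GB).
- by move=> x x0; rewrite /Aop x0.
Qed.

Lemma Aop_mono s1 s2 p1 p2 : 0 < s1 -> s1 <= s2 -> s2 < 1 -> goodf s1 p1 -> goodf s2 p2 ->
  (forall x, p1 x <= p2 x) -> forall x, Aop d c M J f s1 p1 x <= Aop d c M J f s2 p2 x.
Proof.
move=> s10 s12 s21 g1 g2 p12 x.
have s20 : 0 < s2 := lt_le_trans s10 s12.
rewrite (Aop_uf s1 p1 (ltW s10) g1) (Aop_uf s2 p2 (ltW s20) g2).
apply: (@uf_le _ c M c0 M0 s1 s2 _ _ (ltW s10) s12 (ltW s21)).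
- exact: G_noninc s1 p1 (ltW s10) g1.
- by apply: G_bounds => //; rewrite s10 (le_lt_trans s12 s21).
- exact: G_noninc s2 p2 (ltW s20) g2.
- by apply: G_bounds => //; rewrite s20 s21.
- exact: G_mono.
Qed.

End main.
Theorem lemma2p2 (R : realType) (d : R) (J f : R -> R) (cstar c M : R)
  (psi : R -> R) (shift : R -> R) (phi : R -> R -> R) :
  0 < d ->
  condJ J -> condJ2 J -> condf3 f ->
  is_min_speed d J f cstar ->
  0 < c -> c < cstar ->
  0 < M ->
  {in `[0, 1] &, {homo ftilde c M d f : u v / u < v}} ->
  is_nonincr_bdd_tw d J f cstar psi ->
  (forall sigma, 0 < sigma < 1 -> psi (shift sigma) = sigma) ->
  (forall sigma, 0 < sigma < 1 -> forall x : R,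
     (iter n (Aop d c M J f sigma) (phistar_up psi (shift sigma) sigma) x)
       @[n --> \oo] --> phi sigma x) ->
  exists delta0 : R, 0 < delta0 <= 1 /\
    (forall sigma x y, 0 < sigma < delta0 -> x <= y <= 0 ->
       phi sigma y <= phi sigma x) /\
    (forall s1 s2 x, 0 < s1 -> s1 <= s2 -> s2 < 1 -> x <= 0 ->
       phi s1 x <= phi s2 x).
Proof.
move=> d0 [Jc [_ [J0 [_ [J1 _]]]]] _ [_ [_ [_ [f1 [fpos _]]]]] _ c0 _ M0 ftm
  [[_ [_ [psim1 _]]] [psiN _]] hshift hlim.
have psi1 : forall x, psi x <= 1.
  move=> x; apply: (cvgr_to_ge psim1).
  by apply: filterS (nbhs_ninfty_le (num_real x)) => y yx; exact: psiN.
have good_star : forall s, 0 < s < 1 -> goodf s (phistar_up psi (shift s) s).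
  move=> s s01; have /andP[s0 s1] := s01; rewrite /phistar_up; split; [|split].
  - move=> x y xy; rewrite ge_max !le_max lexx orbT andbT psiN //.
    by rewrite lerD2r.
  - by move=> x; rewrite le_max lexx orbT /= ge_max psi1 ltW.
  - move=> x x0; apply/max_idPr; rewrite -{2}(hshift s s01); apply: psiN.
    by rewrite lerDr.
pose it s n := iter n (Aop d c M J f s) (phistar_up psi (shift s) s).
have it_good : forall s n, 0 < s < 1 -> goodf s (it s n).
  move=> s n s01; elim: n => [|n IH]; first exact: good_star.
  by rewrite /it iterS; exact: (@Aop_good _ d J f c M d0 c0 M0 Jc J0 J1 fpos f1 ftm _ _ s01 IH).
have star_mono : forall s1 s2 x, 0 < s1 -> s1 <= s2 -> s2 < 1 ->
    phistar_up psi (shift s1) s1 x <= phistar_up psi (shift s2) s2 x.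
  move=> s1 s2 x s10 s12 s21.
  have s11 : s1 < 1 by exact: le_lt_trans s21.
  have s20 : 0 < s2 by exact: lt_le_trans s12.
  rewrite /phistar_up ge_max !le_max s12 orbT andbT.
  have [h|h] := leP (shift s2) (shift s1).
    by rewrite psiN // lerD2l.
  have : s2 <= s1.
    rewrite -(hshift s1) ?s10 ?s11 // -(hshift s2) ?s20 ?s21 //.
    exact: psiN (ltW h).
  move=> s21'; have es : s1 = s2 by apply/eqP; rewrite eq_le s12 s21'.
  by move: h; rewrite es ltxx.
have it_mono : forall s1 s2 n x, 0 < s1 -> s1 <= s2 -> s2 < 1 -> it s1 n x <= it s2 n x.
  move=> s1 s2 n x s10 s12 s21.
  have s11 : s1 < 1 by exact: le_lt_trans s21.
  have s20 : 0 < s2 by exact: lt_le_trans s12.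
  elim: n x => [|n IH] x; first exact: star_mono.
  rewrite /it !iterS; apply: (@Aop_mono _ d J f c M d0 c0 M0 Jc J0 J1 fpos f1 ftm _ _ _ _ s10 s12 s21) => //.
  - by apply: (it_good s1 n); rewrite s10 s11.
  - by apply: (it_good s2 n); rewrite s20 s21.
exists 1; split; first by rewrite ltr01 lexx.
split.
- move=> s x y s01 /andP[xy _].
  apply: (ler_cvg_to (hlim s s01 y) (hlim s s01 x)).
  by apply: nearW => n; have [pN _] := it_good s n s01; exact: pN.
- move=> s1 s2 x s10 s12 s21 _.
  have s11 : 0 < s1 < 1 by rewrite s10 (le_lt_trans s12 s21).
  have s22 : 0 < s2 < 1 by rewrite (lt_le_trans s10 s12) s21.
  apply: (ler_cvg_to (hlim s1 s11 x) (hlim s2 s22 x)).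
  by apply: nearW => n; exact: it_mono.
Qed.
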